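(* Let $k\ge 3$ and $n\ge 2$ be integers. Then $\chi_\rho(S^n_{P_k})=3$ if $k=3$ (and $n\ge 2$); $\chi_\rho(S^n_{P_k})=4$ if $k\ge4$ and $n=2$; and $\chi_\rho(S^n_{P_k})=5$ if $k\ge 4$ and $n\ge 3$.
   Context: $P_k$ is the path with vertex set $[k]=\{0,\dots,k-1\}$ and edges $\{i,i+1\}$, $0\le i\le k-2$. For a graph $G$ with vertex set $[k]$ and $n\ge 1$, the generalized Sierpi\'nski graph $S^n_G$ has vertex set $[k]^n$, and $u=u_1\cdots u_n$, $v=v_1\cdots v_n$ are adjacent iff there is $i$ with: $u_j=v_j$ for $j<i$; $u_i\neq v_i$ and $u_iv_i\in E(G)$; and $u_j=v_i$, $v_j=u_i$ for all $j>i$. A packing $c$-coloring of a graph $X$ is a map $f:V(X)\to\{1,\dots,c\}$ such that any two distinct vertices $u,v$ with $f(u)=f(v)=i$ satisfy $d_X(u,v)>i$; the packing chromatic number $\chi_\rho(X)$ is the least such $c$. *)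

(* Defs.v *)
From mathcomp Require Import all_boot.
Set Implicit Arguments. Unset Strict Implicit. Unset Printing Implicit Defensive.

Definition path_adj (k : nat) : rel 'I_k :=
  fun i j => (i.+1 == j :> nat) || (j.+1 == i :> nat).

(* Generalized Sierpinski graph S^n_G on words 'I_n -> 'I_k
   (position j of the paper, 1-based, is index j-1 here). *)
Definition sierpinski_adj (k n : nat) (G : rel 'I_k) : rel {ffun 'I_n -> 'I_k} :=
  fun u v => [exists i : 'I_n,
     [&& [forall j : 'I_n, (j < i) ==> (u j == v j)],
         u i != v i, G (u i) (v i) &
         [forall j : 'I_n, (i < j) ==> ((u j == v i) && (v j == u i))]]].

Definition SPk (k n : nat) : rel {ffun 'I_n -> 'I_k} :=
  @sierpinski_adj k n (@path_adj k).

Definition dist_le (T : finType) (e : rel T) (u v : T) (d : nat) : Prop :=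
  exists p : seq T, [/\ path e u p, last u p = v & size p <= d].

Definition packing_coloring (T : finType) (e : rel T) (c : nat) (f : T -> nat) : Prop :=
  (forall x, 1 <= f x <= c) /\
  (forall u v, u != v -> f u = f v -> ~ dist_le e u v (f u)).

Definition packing_colorable (T : finType) (e : rel T) (c : nat) : Prop :=
  exists f : T -> nat, packing_coloring e c f.

Definition packing_chromatic_number_is (T : finType) (e : rel T) (c : nat) : Prop :=
  packing_colorable e c /\ (forall c', packing_colorable e c' -> c <= c').
Arguments SPk : clear implicits.

(* Main.v *)
Require Import Defs.
From mathcomp Require Import all_boot.
From mathcomp Require Import zify.
Set Implicit Arguments. Unset Strict Implicit. Unset Printing Implicit Defensive.

Definition adjn (a b : nat) : bool := (a.+1 == b) || (b.+1 == a).

Definition radj (s s' : seq nat) : Prop :=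
  exists m a b t, [/\ s = nseq m b ++ a :: t, s' = nseq m a ++ b :: t & adjn a b].

Fixpoint rwalk (s : seq nat) (p : seq (seq nat)) : Prop :=
  if p is x :: p' then radj s x /\ rwalk x p' else True.

Definition hd (s : seq nat) := nth 0 s 0.

Lemma adjn_sym a b : adjn a b = adjn b a.
Proof. by rewrite /adjn orbC. Qed.

Lemma radj_sym s s' : radj s s' -> radj s' s.
Proof. move=> [m [a [b [t [-> -> h]]]]]; exists m, b, a, t; split=> //; by rewrite adjn_sym. Qed.

Lemma radj_size s s' : radj s s' -> size s = size s'.
Proof. move=> [m [a [b [t [-> -> h]]]]]; by rewrite !size_cat !size_nseq. Qed.

Lemma radj_hd s s' : radj s s' -> adjn (hd s) (hd s').
Proof.
move=> [m [a [b [t [-> -> h]]]]]; rewrite /hd.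
by case: m => [|m] //=; rewrite adjn_sym.
Qed.

Lemma adjn_odd a b : adjn a b -> odd b = ~~ odd a.
Proof. rewrite /adjn => /orP [/eqP <-|/eqP <-] //=; by rewrite negbK. Qed.

Lemma radj_odd s s' : radj s s' -> odd (hd s') = ~~ odd (hd s).
Proof. by move/radj_hd/adjn_odd. Qed.

Lemma nseq_uniq m m' (b a a' : nat) (t t' : seq nat) :
  nseq m b ++ a :: t = nseq m' b ++ a' :: t' -> a != b -> a' != b ->
  [/\ m = m', a = a' & t = t'].
Proof.
elim: m m' => [|m IH] [|m'] /=.
- by case=> -> ->.
- by case=> ->; rewrite eqxx.
- by case=> <- _ _; rewrite eqxx.
- by case=> /IH H /H H' /H' [-> -> ->].
Qed.


Lemma key_same (a b a' b' : nat) t t' m' :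
  a :: t = nseq m'.+1 b' ++ a' :: t' -> adjn a b -> adjn a' b' ->
  b = a' ->
  let u := b :: t in let v := nseq m'.+1 a' ++ b' :: t' in
  (nth 0 u 1 = hd u /\ adjn (nth 0 v 1) (hd v)) \/
  (nth 0 v 1 = hd v /\ adjn (nth 0 u 1) (hd u)).
Proof.
move=> /= [-> ->] ab ab' e; subst; rewrite /hd /=.
case: m' => [|m'] /=; [left|right]; split=> //; by rewrite adjn_sym.
Qed.

Lemma N_same w u v : radj w u -> radj w v -> hd u = hd v -> u <> v ->
  (nth 0 u 1 = hd u /\ adjn (nth 0 v 1) (hd v)) \/
  (nth 0 v 1 = hd v /\ adjn (nth 0 u 1) (hd u)).
Proof.
move=> [m [a [b [t [ew eu ab]]]]] [m' [a' [b' [t' [ew' ev ab']]]]] hh ne.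
subst u v w.
case: m ew' hh ne => [|m] ew; case: m' ew => [|m'] ew hh ne.
- exfalso; apply: ne; move: ew => /= -[ea et]; subst.
  by move: hh; rewrite /hd /= => ->.
- have H := @key_same a b a' b' t t' m' ew ab ab'.
  apply: H; by move: hh; rewrite /hd.
- have hb : b' = a by move: hh; rewrite /hd.
  have H := @key_same a' b' a b t' t m (esym ew) ab' ab hb.
  case: H => -[h1 h2]; [right|left]; by split.
- exfalso; apply: ne; move: ew => /= -[eb].
  subst b'; move/nseq_uniq => H.
  have na : a != b by apply/negP=> /eqP e; subst; move: ab; rewrite /adjn; lia.
  have na' : a' != b by apply/negP=> /eqP e; subst; move: ab'; rewrite /adjn; lia.
  by case: (H na na') => -> -> ->.
Qed.

Lemma adjn_neq a b : adjn a b -> a != b.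
Proof. rewrite /adjn; lia. Qed.

Lemma N2_aux (a b a' b' : nat) t t' m' :
  a :: t = nseq m'.+1 b' ++ a' :: t' -> adjn a b -> adjn a' b' ->
  nth 0 (b :: t) 1 = b -> nth 0 (nseq m'.+1 a' ++ b' :: t') 1 = a' -> False.
Proof.
move=> /= [-> ->] ab ab'; case: m' => [|m'] /= h1 h2.
- by move: (adjn_neq ab'); rewrite h2 eqxx.
- by move: (adjn_neq ab); rewrite h1 eqxx.
Qed.

Lemma N2 w u v : radj w u -> radj w v -> nth 0 u 1 = hd u -> nth 0 v 1 = hd v -> u = v.
Proof.
move=> [m [a [b [t [ew eu ab]]]]] [m' [a' [b' [t' [ew' ev ab']]]]] h1 h2.
subst u v w.
case: m ew' h1 => [|m] ew h1; case: m' ew h2 => [|m'] ew h2.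
- move: ew => /= -[ea et]; subst; move: h1 h2; rewrite /hd /= => <- <-.
  by [].
- by exfalso; apply: (N2_aux ew ab ab').
- by exfalso; apply: (N2_aux (esym ew) ab' ab).
- move: ew => /= -[eb]; subst b'; move/nseq_uniq => H.
  have na := adjn_neq ab; have na' := adjn_neq ab'.
  by case: (H na na') => -> -> ->.
Qed.

Lemma D2form y q x1 x2 : radj [:: y, y & q] x1 -> radj x1 x2 -> x2 <> [:: y, y & q] ->
  (exists c, x2 = [:: c, y & q] /\ (c = y.+2 \/ c.+2 = y)) \/
  (exists c, x2 = [:: y, c & q] /\ adjn c y) \/
  (exists t0 a r c, [:: y, y & q] = nseq t0.+2 y ++ a :: r /\ adjn a y /\
      x2 = c :: nseq t0.+1 a ++ y :: r /\ adjn c a).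
Proof.
move=> [m [a [b [t [eu e1 ab]]]]] [m' [a' [b' [t' [e1' e2 ab']]]]] ne.
subst x1 x2.
case: m eu e1' => [|[|m]] /= eu e1'.
- case: eu => ea et; subst a t.
  case: m' e1' ne => [|[|m']] /= e1' ne.
  + case: e1' => ea et; subst a' t'.
    left; exists b'; split=> //.
    have : b' != y by apply/negP => /eqP e; apply: ne; rewrite e.
    by move: ab ab'; rewrite /adjn; lia.
  + case: e1' => eb ea et; subst b' a' t'.
    right; left; exists b; split=> //; by rewrite adjn_sym.
  + case: e1' => eb eb'; subst b'.
    by move: (adjn_neq ab); rewrite eb' eqxx.
- case: eu => eb ea _; subst b a.
  by move: (adjn_neq ab); rewrite eqxx.
- case: eu => eb eb2 eu; subst b.
  case: m' e1' ne => [|m'] /= e1' ne.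
  + case: e1' => ea et; subst a' t'.
    right; right; exists m, a, t, b'; split; first by rewrite eu.
    split; first by [].
    by split; last rewrite adjn_sym.
  + case: e1' => eb h; subst b'.
    move: h; rewrite -[a :: nseq m a ++ _]/(nseq m.+1 a ++ y :: t) => /nseq_uniq H.
    have na := adjn_neq ab; have na' := adjn_neq ab'.
    rewrite eq_sym in na.
    case: (H na na') => em ey et; subst.
    by exfalso; apply: ne.
Qed.

Definition D2 y q x2 : Prop :=
  (exists c, x2 = [:: c, y & q] /\ (c = y.+2 \/ c.+2 = y)) \/
  (exists c, x2 = [:: y, c & q] /\ adjn c y) \/
  (exists t0 a r c, [:: y, y & q] = nseq t0.+2 y ++ a :: r /\ adjn a y /\
      x2 = c :: nseq t0.+1 a ++ y :: r /\ adjn c a).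

Lemma comb_half y q y' q' x2 :
  (exists c, x2 = [:: y, c & q] /\ adjn c y) ->
  (exists t0 a r c, [:: y', y' & q'] = nseq t0.+2 y' ++ a :: r /\ adjn a y' /\
      x2 = c :: nseq t0.+1 a ++ y' :: r /\ adjn c a) ->
  odd (nth 0 q 0) != odd (nth 0 q' 0).
Proof.
move=> [c [-> cy]] [t0 [a [r [c' [ev [ay [ex ca]]]]]]].
move: ev => /= -[eq']; subst q'.
move: ex => /= -[ey ec eq]; subst.
have := adjn_odd ay.
case: t0 => [|t0] /= ->; by case: (odd a).
Qed.

Lemma c1 y q y' q' x2 : (exists c, x2 = [:: c, y & q] /\ (c = y.+2 \/ c.+2 = y)) ->
   ~ (exists c, x2 = [:: y', c & q'] /\ adjn c y').
Proof.
move=> [c [e h]] [c' [e' h']]; rewrite e in e'; case: e' => e1 e2 e3; subst.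
by move: h'; rewrite /adjn; lia.
Qed.

Lemma c2 y q y' q' x2 : (exists c, x2 = [:: c, y & q] /\ (c = y.+2 \/ c.+2 = y)) ->
   ~ (exists t0 a r c, [:: y', y' & q'] = nseq t0.+2 y' ++ a :: r /\ adjn a y' /\
      x2 = c :: nseq t0.+1 a ++ y' :: r /\ adjn c a).
Proof.
move=> [c [e h]] [t0 [a [r [c' [_ [_ [e' h']]]]]]]; rewrite e in e'.
case: e' => e1 e2 e3; subst.
by move: h'; rewrite /adjn; lia.
Qed.

Lemma comb y q y' q' x2 : D2 y q x2 -> D2 y' q' x2 ->
  [:: y, y & q] = [:: y', y' & q'] \/ odd (nth 0 q 0) != odd (nth 0 q' 0).
Proof.
move=> [h1|[h1|h1]] [h2|[h2|h2]].
- left; case: h1 => c [e _]; case: h2 => c' [e' _]; rewrite e in e'.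
  by case: e' => _ -> ->.
- by case: (c1 h1 h2).
- by case: (c2 h1 h2).
- by case: (c1 h2 h1).
- left; case: h1 => c [e _]; case: h2 => c' [e' _]; rewrite e in e'.
  by case: e' => -> _ ->.
- right; exact: (comb_half h1 h2).
- by case: (c2 h2 h1).
- right; rewrite eq_sym; exact: (comb_half h2 h1).
- left.
  case: h1 => t0 [a [r [c [ev [ay [ex ca]]]]]].
  case: h2 => t0' [a' [r' [c' [ev' [ay' [ex' ca']]]]]].
  rewrite ev ev'; move: ex'; rewrite ex /= => -[ec ea h]; subst c' a'.
  move: h => /nseq_uniq H.
  have na := adjn_neq ay; have na' := adjn_neq ay'.
  rewrite eq_sym in na; rewrite eq_sym in na'.
  by case: (H na na') => -> -> ->.
Qed.

Definition F4 (s : seq nat) : nat :=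
  if ~~ odd (hd s) then 1
  else if nth 0 s 1 == hd s then (if odd (nth 0 s 2) then 5 else 4)
  else if hd s %% 4 == 1 then 2 else 3.

Definition F3 (s : seq nat) : nat :=
  if ~~ odd (hd s) then 1 else if ~~ odd (nth 0 s 1) then 2 else 3.

Lemma rwalk_odd s p : rwalk s p -> odd (hd (last s p)) = odd (hd s) (+) odd (size p).
Proof.
elim: p s => [|x p IH] s /=; first by rewrite addbF.
move=> [sx w]; rewrite (IH _ w) (radj_odd sx).
by case: (odd (hd s)); case: (odd (size p)).
Qed.

Lemma eq2_shape s : odd (hd s) -> nth 0 s 1 = hd s -> s = [:: hd s, hd s & drop 2 s].
Proof.
case: s => [|y [|z q]]; rewrite /hd //= => oy.
- by move=> e; rewrite -e in oy.
- by move=> ->; rewrite drop0.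
Qed.

Lemma F4_le s : F4 s <= 5.
Proof. rewrite /F4; by repeat case: ifP. Qed.

Lemma core4 s p s' : rwalk s p -> last s p = s' -> s <> s' -> F4 s = F4 s' ->
  size p <= F4 s -> False.
Proof.
move=> w el ne eF le.
have par := rwalk_odd w; rewrite el in par.
have hle := F4_le s.
case os: (odd (hd s)).
- have os' : odd (hd s').
    case os'': (odd (hd s')) => //; move: eF; rewrite /F4 os os'' /=.
    by repeat case: ifP.
  rewrite os os' in par.
  case E: (nth 0 s 1 == hd s).
  + have E' : nth 0 s' 1 == hd s'.
      case E'': (nth 0 s' 1 == hd s') => //; move: eF; rewrite /F4 os os' /= E E''.
      by repeat case: ifP.
    have e2 : odd (nth 0 s 2) = odd (nth 0 s' 2).
      move: eF; rewrite /F4 os os' /= E E'.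
      by case: (odd (nth 0 s 2)); case: (odd (nth 0 s' 2)).
    move/eqP: E => E; move/eqP: E' => E'.
    case: p w el par le => [|x1 [|x2 [|x3 [|x4 [|x5 [|x6 p]]]]]] //=.
    * move=> [sx1 [x12 _]] e _ _; subst x2; apply: ne.
      apply: (N2 (radj_sym sx1) x12) => //.
    * move=> [sx1 [x12 [x23 [x34 _]]]] e _ _; subst x4.
      have [ex2s|nx2s] := eqVneq x2 s.
        subst x2; apply: ne; apply: (N2 (radj_sym x23) x34) => //.
      have [ex2s'|nx2s'] := eqVneq x2 s'.
        subst x2; apply: ne; apply: (N2 (radj_sym sx1) x12) => //.
      have es := eq2_shape os E.
      have es' := eq2_shape os' E'.
      rewrite es in sx1 ne nx2s; rewrite es' in x34 ne nx2s'.
      have d1 := D2form sx1 x12 (fun e => negP nx2s (introT eqP e)).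
      have d2 := D2form (radj_sym x34) (radj_sym x23) (fun e => negP nx2s' (introT eqP e)).
      case: (@comb (hd s) (drop 2 s) (hd s') (drop 2 s') x2 d1 d2) => [h|/negP h].
        exact: ne h.
      apply: h; by rewrite !nth_drop !addn0 e2.
    * by move=> *; lia.
  + have E' : nth 0 s' 1 != hd s'.
      apply/negP => E'; move: eF; rewrite /F4 os os' /= E E'.
      by repeat case: ifP.
    have m4 : hd s %% 4 = hd s' %% 4.
      move: eF; rewrite /F4 os os' /= E (negbTE E').
      move: os os'; repeat case: ifP; move=> *; lia.
    have c3 : F4 s <= 3 by rewrite /F4 os /= E; case: ifP.
    case: p w el par le => [|x1 [|x2 [|x3 p]]] //=.
    * move=> [sx1 [x12 _]] e _ _; subst x2.
      have hh : hd s = hd s'.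
        have := radj_hd sx1; have := radj_hd x12; move: os os' m4; rewrite /adjn; lia.
      case: (N_same (radj_sym sx1) x12 hh ne) => -[h _].
      -- by move: E; rewrite h eqxx.
      -- by move: E'; rewrite h eqxx.
    * by move=> *; lia.
- have os' : ~~ odd (hd s').
    apply/negP => os'; move: eF; rewrite /F4 os os' /=.
    by repeat case: ifP.
  have c1 : F4 s = 1 by rewrite /F4 os.
  rewrite os (negbTE os') in par.
  move: le; rewrite c1.
  case: p w el par => [|x1 [|x2 p]] //=.
Qed.

Lemma core3 s p s' : rwalk s p -> last s p = s' -> s <> s' -> F3 s = F3 s' ->
  size p <= F3 s -> hd s < 3 -> hd s' < 3 -> False.
Proof.
move=> w el ne eF le h3 h3'.
have par := rwalk_odd w; rewrite el in par.
have hle : F3 s <= 3 by rewrite /F3; repeat case: ifP.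
case os: (odd (hd s)).
- have os' : odd (hd s').
    case os'': (odd (hd s')) => //; move: eF; rewrite /F3 os os'' /=.
    by repeat case: ifP.
  rewrite os os' in par.
  have e1 : odd (nth 0 s 1) = odd (nth 0 s' 1).
    move: eF; rewrite /F3 os os' /=.
    by case: (odd (nth 0 s 1)); case: (odd (nth 0 s' 1)).
  case: p w el par le => [|x1 [|x2 [|x3 p]]] //=.
  * move=> [sx1 [x12 _]] e _ _; subst x2.
    have hh : hd s = hd s' by move: os os' h3 h3'; lia.
    case: (N_same (radj_sym sx1) x12 hh ne) => -[h a].
    -- rewrite adjn_sym in a; move: e1; rewrite h (adjn_odd a) hh; by case: (odd (hd s')).
    -- rewrite adjn_sym in a; move: e1; rewrite h (adjn_odd a) hh; by case: (odd (hd s')).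
  * by move=> *; lia.
- have os' : ~~ odd (hd s').
    apply/negP => os'; move: eF; rewrite /F3 os os' /=.
    by repeat case: ifP.
  have c1 : F3 s = 1 by rewrite /F3 os.
  rewrite os (negbTE os') in par.
  move: le; rewrite c1.
  by case: p w el par => [|x1 [|x2 p]] //=.
Qed.


Definition toR k n (u : {ffun 'I_n -> 'I_k}) : seq nat :=
  [seq val (u (rev_ord i)) | i <- enum 'I_n].

Lemma size_toR k n (u : {ffun 'I_n -> 'I_k}) : size (toR u) = n.
Proof. by rewrite size_map size_enum_ord. Qed.

Lemma nth_toR k n (u : {ffun 'I_n -> 'I_k}) (j : 'I_n) :
  nth 0 (toR u) j = u (rev_ord j).
Proof. by rewrite (nth_map j) ?size_enum_ord // nth_ord_enum. Qed.

Lemma nth_toR' k n (u : {ffun 'I_n -> 'I_k}) (j : 'I_n) :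
  nth 0 (toR u) (n - j.+1) = u j.
Proof. by have := nth_toR u (rev_ord j); rewrite rev_ordK. Qed.

Lemma toR_inj k n : injective (@toR k n).
Proof.
move=> u v e; apply/ffunP => j; apply: val_inj.
have h := nth_toR' u j; rewrite e nth_toR' in h; by rewrite /= h.
Qed.

Lemma nth_seg m (a b : nat) t x :
  nth 0 (nseq m b ++ a :: t) x =
  if x < m then b else if x == m then a else nth 0 t (x - m.+1).
Proof.
rewrite nth_cat size_nseq nth_nseq; case: ltnP => // h.
case: eqP => [->|ne]; first by rewrite subnn.
have -> : x - m = (x - m.+1).+1 by lia.
by [].
Qed.

Lemma SPk_radj k n (u v : {ffun 'I_n -> 'I_k}) : SPk k n u v -> radj (toR u) (toR v).
Proof.
move=> /existsP [i /and4P [h1 h2 h3 h4]].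
move/forallP: h1 => h1; move/forallP: h4 => h4.
have iN := ltn_ord i.
exists (n - i.+1), (val (u i)), (val (v i)), (drop (n - i.+1).+1 (toR u)).
have key : forall (w : {ffun 'I_n -> 'I_k}) c d,
   (forall j : 'I_n, i < j -> val (w j) = c) -> val (w i) = d ->
   (forall j : 'I_n, j < i -> w j = u j) ->
   toR w = nseq (n - i.+1) c ++ d :: drop (n - i.+1).+1 (toR u).
  move=> w c d hc hd hl.
  apply: (@eq_from_nth _ 0).
    rewrite size_cat size_nseq /= size_drop !size_toR; lia.
  move=> j; rewrite size_toR => jn.
  have rn : n - j.+1 < n by lia.
  have ej : forall z : {ffun 'I_n -> 'I_k}, nth 0 (toR z) j = val (z (Ordinal rn)).
    move=> z; rewrite -[j]/(nat_of_ord (Ordinal jn)) nth_toR; congr (val (z _)).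
    by apply: val_inj.
  rewrite nth_seg ej.
  case: ltnP => h.
    apply: hc => /=; lia.
  case: eqP => [e|ne].
    have -> : Ordinal rn = i by apply: val_inj => /=; lia.
    by [].
  rewrite nth_drop.
  have -> : (n - i.+1).+1 + (j - (n - i.+1).+1) = j by lia.
  rewrite ej hl //= ; lia.
split.
- apply: key => //.
  move=> j ij; by move/implyP: (h4 j) => /(_ ij) /andP [/eqP -> _].
- apply: key => //.
  + move=> j ij; by move/implyP: (h4 j) => /(_ ij) /andP [_ /eqP ->].
  + move=> j ij; by move/implyP: (h1 j) => /(_ ij) /eqP ->.
- exact: h3.
Qed.

Lemma radj_SPk k n (u v : {ffun 'I_n -> 'I_k}) : radj (toR u) (toR v) -> SPk k n u v.
Proof.
move=> [m [a [b [t [eu ev ab]]]]].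
have sz : n = m + (size t).+1.
  by move: (size_toR u); rewrite eu size_cat size_nseq /=.
have mn : n - m.+1 < n by lia.
pose i := Ordinal mn.
have nu : forall j : 'I_n, val (u j) = nth 0 (nseq m b ++ a :: t) (n - j.+1).
  by move=> j; rewrite -eu nth_toR'.
have nv : forall j : 'I_n, val (v j) = nth 0 (nseq m a ++ b :: t) (n - j.+1).
  by move=> j; rewrite -ev nth_toR'.
have ui : val (u i) = a.
  rewrite nu nth_seg /=; have -> : n - (n - m.+1).+1 = m by lia.
  by rewrite ltnn eqxx.
have vi : val (v i) = b.
  rewrite nv nth_seg /=; have -> : n - (n - m.+1).+1 = m by lia.
  by rewrite ltnn eqxx.
apply/existsP; exists i; apply/and4P; split.
- apply/forallP => j; apply/implyP => ji; apply/eqP/val_inj.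
  rewrite nu nv !nth_seg /=.
  have h1 : (n - j.+1 < m) = false by apply/negbTE; rewrite -leqNgt; move: ji (ltn_ord j); rewrite /i /=; lia.
  have h2 : (n - j.+1 == m) = false by apply/negbTE; move: ji (ltn_ord j); rewrite /i /=; lia.
  by rewrite h1 h2.
- apply/negP => /eqP e; move: (adjn_neq ab); by rewrite -ui -vi e eqxx.
- by rewrite /path_adj ui vi.
- apply/forallP => j; apply/implyP => ji; apply/andP; split; apply/eqP/val_inj.
  + rewrite vi nu nth_seg.
    have -> : n - j.+1 < m by move: ji (ltn_ord j); rewrite /i /=; lia.
    by [].
  + rewrite ui nv nth_seg.
    have -> : n - j.+1 < m by move: ji (ltn_ord j); rewrite /i /=; lia.
    by [].
Qed.


Definition ofR k n (d : 'I_k) (s : seq nat) : {ffun 'I_n -> 'I_k} :=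
  [ffun j : 'I_n => insubd d (nth 0 s (n - j.+1))].

Lemma toR_ofR k n (d : 'I_k) s : size s = n -> all (fun x => x < k) s ->
  toR (ofR n d s) = s.
Proof.
move=> sz /(all_nthP 0) al.
apply: (@eq_from_nth _ 0); first by rewrite size_toR.
move=> j; rewrite size_toR => jn.
rewrite -[j]/(nat_of_ord (Ordinal jn)) nth_toR ffunE val_insubd /=.
have -> : n - (n - j.+1).+1 = j by lia.
by rewrite al // sz.
Qed.

Lemma path_rwalk k n (u : {ffun 'I_n -> 'I_k}) p :
  path (SPk k n) u p -> rwalk (toR u) (map (@toR k n) p).
Proof.
elim: p u => [|x p IH] u //= /andP [ux px]; split; [exact: SPk_radj | exact: IH].
Qed.

Lemma nth_toR_lt k n (u : {ffun 'I_n -> 'I_k}) x : x < n -> nth 0 (toR u) x < k.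
Proof.
move=> xn; rewrite -[x]/(nat_of_ord (Ordinal xn)) nth_toR; exact: ltn_ord.
Qed.

Lemma ub k n c (F : seq nat -> nat) :
  (forall u : {ffun 'I_n -> 'I_k}, 1 <= F (toR u) <= c) ->
  (forall (u v : {ffun 'I_n -> 'I_k}) p, rwalk (toR u) p -> last (toR u) p = toR v ->
     toR u <> toR v -> F (toR u) = F (toR v) -> size p <= F (toR u) -> False) ->
  packing_colorable (SPk k n) c.
Proof.
move=> hF core; exists (fun u => F (toR u)); split => // u v ne e [p [pp lp sp]].
apply: (core u v (map (@toR k n) p)).
- exact: path_rwalk.
- by rewrite last_map lp.
- by move=> /toR_inj e'; rewrite e' eqxx in ne.
- exact: e.
- by rewrite size_map.
Qed.

Definition radjb (s s' : seq nat) : bool :=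
  has (fun m => let a := nth 0 s m in let b := nth 0 s' m in
     [&& s == nseq m b ++ a :: drop m.+1 s, s' == nseq m a ++ b :: drop m.+1 s & adjn a b])
    (iota 0 (size s)).

Lemma radjbP s s' : radjb s s' -> radj s s'.
Proof.
move=> /hasP [m _ /and3P [/eqP e1 /eqP e2 ab]].
by exists m, (nth 0 s m), (nth 0 s' m), (drop m.+1 s).
Qed.

Lemma radj_cat s s' z : radj s s' -> radj (s ++ z) (s' ++ z).
Proof.
move=> [m [a [b [t [-> -> ab]]]]]; exists m, a, b, (t ++ z).
by rewrite -!catA.
Qed.

Definition pad n (s : seq nat) := s ++ nseq (n - size s) 0.

Definition valid kk m0 (s : seq nat) := (size s == m0) && all (fun x => x < kk) s.

Definition check kk m0 (W : seq (seq nat)) (cons : seq (nat * nat * seq (seq nat))) : bool :=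
  [&& uniq W, all (valid kk m0) W &
   all (fun c => match c with (i, j, mids) =>
      [&& i < size W, j < size W, i != j, all (valid kk m0) mids &
          path radjb (nth [::] W i) (rcons mids (nth [::] W j))] end) cons].

Definition csOf (cons : seq (nat * nat * seq (seq nat))) : seq (nat * nat * nat) :=
  map (fun c => match c with (i, j, mids) => (i, j, (size mids).+1) end) cons.

Definition okc (a : seq nat) (c : nat * nat * nat) : bool :=
  match c with (i, j, dd) =>
    if (i < size a) && (j < size a) then (nth 0 a i != nth 0 a j) || (nth 0 a i < dd) else true
  end.

Fixpoint lazyhas (p : nat -> bool) (l : seq nat) : bool :=
  if l is c :: l' then (if p c then true else lazyhas p l') else false.

Lemma lazyhasE p l : lazyhas p l = has p l.
Proof. by elim: l => //= c l ->; case: (p c). Qed.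

Fixpoint srch (C' : nat) (cs : seq (nat * nat * nat)) (fuel : nat) (a : seq nat) : bool :=
  if fuel is f.+1 then
    lazyhas (fun c => if all (okc (rcons a c)) cs then srch C' cs f (rcons a c) else false)
      (iota 1 C')
  else true.

Lemma srch_sound C' cs N (g : nat -> nat) :
  (forall i, i < N -> 0 < g i <= C') ->
  (forall i j dd, (i, j, dd) \in cs -> i < N -> j < N -> g i = g j -> g i < dd) ->
  srch C' cs N [::] = true.
Proof.
move=> hg hc.
suff H : forall f l, l + f = N -> srch C' cs f (mkseq g l) = true by exact: (H N 0).
elim=> [|f IH] l e //=.
rewrite lazyhasE; apply/hasP; exists (g l).
  rewrite mem_iota; have := hg l; lia.
rewrite -mkseqS IH; last by lia.
case: ifP => // /negbT /negP h; exfalso; apply: h; apply/allP => -[[i j] dd] hin; rewrite /okc size_mkseq.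
case: ifP => // /andP [il jl].
rewrite !nth_mkseq //.
case: eqVneq => //= eij.
apply: (hc i j dd) => //; lia.
Qed.

Lemma dist_le_mono (T : finType) (e : rel T) u v d d' :
  dist_le e u v d -> d <= d' -> dist_le e u v d'.
Proof. move=> [p [h1 h2 h3]] dd; exists p; split=> //; exact: leq_trans h3 dd. Qed.

Lemma valid_pad k n kk m0 (d : 'I_k) s : kk <= k -> m0 <= n -> valid kk m0 s ->
  toR (ofR n d (pad n s)) = pad n s.
Proof.
move=> hk hm /andP [/eqP ss al]; apply: toR_ofR.
  rewrite /pad size_cat size_nseq ss; lia.
rewrite /pad all_cat; apply/andP; split.
  apply/allP => x /(allP al) xk; exact: leq_trans xk hk.
apply/allP => x /nseqP [-> _]; have := ltn_ord d; lia.
Qed.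

Lemma lift_path k n kk m0 (d : 'I_k) x l : kk <= k -> m0 <= n ->
  valid kk m0 x -> all (valid kk m0) l -> path radjb x l ->
  path (SPk k n) (ofR n d (pad n x)) (map (fun s => ofR n d (pad n s)) l).
Proof.
move=> hk hm; elim: l x => [|y l IH] x //= vx /andP [vy vl] /andP [xy pl].
apply/andP; split; last exact: IH.
apply: radj_SPk; rewrite !(valid_pad d hk hm) //.
have sx : size x = size y by move: vx vy => /andP [/eqP -> _] /andP [/eqP -> _].
rewrite /pad sx; apply: radj_cat; exact: radjbP.
Qed.

Lemma lb k n kk m0 C' W cons (d : 'I_k) :
  kk <= k -> m0 <= n -> check kk m0 W cons ->
  srch C' (csOf cons) (size W) [::] = false ->
  forall f, packing_coloring (SPk k n) C' f -> False.
Proof.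
move=> hk hm /and3P [uW vW vc] hs f [fb fp].
pose X i := ofR n d (pad n (nth [::] W i)).
have : srch C' (csOf cons) (size W) [::] = true; last by rewrite hs.
apply: (srch_sound (g := fun i => f (X i))).
  by move=> i _; apply: fb.
move=> i j dd /mapP [[[i' j'] mids] hin [ei ej edd]] iW jW eg; subst i' j' dd.
have /and5P [_ _ nij vm pth] := allP vc _ hin.
have vi : valid kk m0 (nth [::] W i) := allP vW _ (mem_nth _ iW).
have vj : valid kk m0 (nth [::] W j) := allP vW _ (mem_nth _ jW).
have neX : X i != X j.
  apply/negP => /eqP e.
  have := congr1 (@toR k n) e; rewrite /X !(valid_pad d hk hm) // /pad.
  have hs12 : size (nth [::] W i) = size (nth [::] W j).
    by move: (vi) (vj) => /andP [/eqP e1 _] /andP [/eqP e2 _]; rewrite e1 e2.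
  rewrite hs12; move/eqP; rewrite (eqseq_cat _ _ hs12) => /andP [/eqP e' _].
  by move: nij; rewrite -(nth_uniq [::] iW jW uW) e' eqxx.
rewrite ltnNge; apply/negP => le.
apply: (fp _ _ neX eg).
apply: (dist_le_mono _ le).
exists (map (fun s => ofR n d (pad n s)) (rcons mids (nth [::] W j))); split.
- apply: (@lift_path k n kk m0 d) => //; by rewrite all_rcons vj.
- by rewrite map_rcons last_rcons.
- by rewrite size_map size_rcons.
Qed.
Definition W3 : seq (seq nat) := [:: [:: 0; 0];
  [:: 1; 0];
  [:: 0; 1];
  [:: 1; 1]].
Definition cons3 : seq (nat * nat * seq (seq nat)) := [:: (0, 1, [::]);
  (0, 2, [:: [:: 1; 0]]);
  (1, 2, [::]);
  (1, 3, [:: [:: 0; 1]]);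
  (2, 3, [::])].
Definition W4 : seq (seq nat) := [:: [:: 1; 1];
  [:: 0; 1];
  [:: 2; 1];
  [:: 3; 1];
  [:: 1; 2];
  [:: 0; 2];
  [:: 2; 2];
  [:: 3; 2]].
Definition cons4 : seq (nat * nat * seq (seq nat)) := [:: (0, 1, [::]);
  (0, 2, [::]);
  (0, 3, [:: [:: 2; 1]]);
  (0, 4, [:: [:: 2; 1]]);
  (0, 5, [:: [:: 2; 1]; [:: 1; 2]]);
  (0, 6, [:: [:: 2; 1]; [:: 1; 2]]);
  (1, 2, [:: [:: 1; 1]]);
  (1, 3, [:: [:: 1; 1]; [:: 2; 1]]);
  (1, 4, [:: [:: 1; 1]; [:: 2; 1]]);
  (2, 3, [::]);
  (2, 4, [::]);
  (2, 5, [:: [:: 1; 2]]);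
  (2, 6, [:: [:: 1; 2]]);
  (2, 7, [:: [:: 1; 2]; [:: 2; 2]]);
  (3, 4, [:: [:: 2; 1]]);
  (3, 5, [:: [:: 2; 1]; [:: 1; 2]]);
  (3, 6, [:: [:: 2; 1]; [:: 1; 2]]);
  (4, 5, [::]);
  (4, 6, [::]);
  (4, 7, [:: [:: 2; 2]]);
  (5, 6, [:: [:: 1; 2]]);
  (5, 7, [:: [:: 1; 2]; [:: 2; 2]]);
  (6, 7, [::])].
Definition W5 : seq (seq nat) := [:: [:: 2; 2; 1];
  [:: 1; 2; 1];
  [:: 2; 1; 1];
  [:: 1; 1; 1];
  [:: 3; 1; 1];
  [:: 0; 2; 1];
  [:: 3; 2; 1];
  [:: 2; 3; 1];
  [:: 1; 3; 1];
  [:: 3; 3; 1];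
  [:: 1; 1; 2];
  [:: 0; 1; 2];
  [:: 1; 0; 2];
  [:: 0; 0; 2];
  [:: 2; 0; 2];
  [:: 2; 1; 2];
  [:: 3; 1; 2];
  [:: 1; 2; 2];
  [:: 0; 2; 2];
  [:: 2; 2; 2]].
Definition cons5 : seq (nat * nat * seq (seq nat)) := [:: (0, 1, [::]);
  (0, 2, [:: [:: 1; 2; 1]]);
  (0, 3, [:: [:: 1; 2; 1]; [:: 2; 1; 1]]);
  (0, 4, [:: [:: 1; 2; 1]; [:: 2; 1; 1]]);
  (0, 5, [:: [:: 1; 2; 1]]);
  (0, 6, [::]);
  (0, 7, [:: [:: 3; 2; 1]]);
  (0, 8, [:: [:: 3; 2; 1]; [:: 2; 3; 1]]);
  (0, 9, [:: [:: 3; 2; 1]; [:: 2; 3; 1]]);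
  (0, 10, [::]);
  (0, 11, [:: [:: 1; 1; 2]]);
  (0, 12, [:: [:: 1; 1; 2]; [:: 0; 1; 2]]);
  (0, 13, [:: [:: 1; 1; 2]; [:: 0; 1; 2]; [:: 1; 0; 2]]);
  (0, 14, [:: [:: 1; 1; 2]; [:: 0; 1; 2]; [:: 1; 0; 2]]);
  (0, 15, [:: [:: 1; 1; 2]]);
  (0, 16, [:: [:: 1; 1; 2]; [:: 2; 1; 2]]);
  (0, 17, [:: [:: 1; 1; 2]; [:: 2; 1; 2]]);
  (0, 18, [:: [:: 1; 1; 2]; [:: 2; 1; 2]; [:: 1; 2; 2]]);
  (0, 19, [:: [:: 1; 1; 2]; [:: 2; 1; 2]; [:: 1; 2; 2]]);
  (1, 2, [::]);
  (1, 3, [:: [:: 2; 1; 1]]);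
  (1, 4, [:: [:: 2; 1; 1]]);
  (1, 5, [::]);
  (1, 6, [:: [:: 2; 2; 1]]);
  (1, 7, [:: [:: 2; 2; 1]; [:: 3; 2; 1]]);
  (1, 8, [:: [:: 2; 2; 1]; [:: 3; 2; 1]; [:: 2; 3; 1]]);
  (1, 9, [:: [:: 2; 2; 1]; [:: 3; 2; 1]; [:: 2; 3; 1]]);
  (1, 10, [:: [:: 2; 2; 1]]);
  (1, 11, [:: [:: 2; 2; 1]; [:: 1; 1; 2]]);
  (1, 12, [:: [:: 2; 2; 1]; [:: 1; 1; 2]; [:: 0; 1; 2]]);
  (1, 15, [:: [:: 2; 2; 1]; [:: 1; 1; 2]]);
  (1, 16, [:: [:: 2; 2; 1]; [:: 1; 1; 2]; [:: 2; 1; 2]]);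
  (1, 17, [:: [:: 2; 2; 1]; [:: 1; 1; 2]; [:: 2; 1; 2]]);
  (2, 3, [::]);
  (2, 4, [::]);
  (2, 5, [:: [:: 1; 2; 1]]);
  (2, 6, [:: [:: 1; 2; 1]; [:: 2; 2; 1]]);
  (2, 7, [:: [:: 1; 2; 1]; [:: 2; 2; 1]; [:: 3; 2; 1]]);
  (2, 10, [:: [:: 1; 2; 1]; [:: 2; 2; 1]]);
  (2, 11, [:: [:: 1; 2; 1]; [:: 2; 2; 1]; [:: 1; 1; 2]]);
  (2, 15, [:: [:: 1; 2; 1]; [:: 2; 2; 1]; [:: 1; 1; 2]]);
  (3, 4, [:: [:: 2; 1; 1]]);
  (3, 5, [:: [:: 2; 1; 1]; [:: 1; 2; 1]]);
  (3, 6, [:: [:: 2; 1; 1]; [:: 1; 2; 1]; [:: 2; 2; 1]]);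
  (3, 10, [:: [:: 2; 1; 1]; [:: 1; 2; 1]; [:: 2; 2; 1]]);
  (4, 5, [:: [:: 2; 1; 1]; [:: 1; 2; 1]]);
  (4, 6, [:: [:: 2; 1; 1]; [:: 1; 2; 1]; [:: 2; 2; 1]]);
  (4, 10, [:: [:: 2; 1; 1]; [:: 1; 2; 1]; [:: 2; 2; 1]]);
  (5, 6, [:: [:: 1; 2; 1]; [:: 2; 2; 1]]);
  (5, 7, [:: [:: 1; 2; 1]; [:: 2; 2; 1]; [:: 3; 2; 1]]);
  (5, 10, [:: [:: 1; 2; 1]; [:: 2; 2; 1]]);
  (5, 11, [:: [:: 1; 2; 1]; [:: 2; 2; 1]; [:: 1; 1; 2]]);
  (5, 15, [:: [:: 1; 2; 1]; [:: 2; 2; 1]; [:: 1; 1; 2]]);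
  (6, 7, [::]);
  (6, 8, [:: [:: 2; 3; 1]]);
  (6, 9, [:: [:: 2; 3; 1]]);
  (6, 10, [:: [:: 2; 2; 1]]);
  (6, 11, [:: [:: 2; 2; 1]; [:: 1; 1; 2]]);
  (6, 12, [:: [:: 2; 2; 1]; [:: 1; 1; 2]; [:: 0; 1; 2]]);
  (6, 15, [:: [:: 2; 2; 1]; [:: 1; 1; 2]]);
  (6, 16, [:: [:: 2; 2; 1]; [:: 1; 1; 2]; [:: 2; 1; 2]]);
  (6, 17, [:: [:: 2; 2; 1]; [:: 1; 1; 2]; [:: 2; 1; 2]]);
  (7, 8, [::]);
  (7, 9, [::]);
  (7, 10, [:: [:: 3; 2; 1]; [:: 2; 2; 1]]);
  (7, 11, [:: [:: 3; 2; 1]; [:: 2; 2; 1]; [:: 1; 1; 2]]);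
  (7, 15, [:: [:: 3; 2; 1]; [:: 2; 2; 1]; [:: 1; 1; 2]]);
  (8, 9, [:: [:: 2; 3; 1]]);
  (8, 10, [:: [:: 2; 3; 1]; [:: 3; 2; 1]; [:: 2; 2; 1]]);
  (9, 10, [:: [:: 2; 3; 1]; [:: 3; 2; 1]; [:: 2; 2; 1]]);
  (10, 11, [::]);
  (10, 12, [:: [:: 0; 1; 2]]);
  (10, 13, [:: [:: 0; 1; 2]; [:: 1; 0; 2]]);
  (10, 14, [:: [:: 0; 1; 2]; [:: 1; 0; 2]]);
  (10, 15, [::]);
  (10, 16, [:: [:: 2; 1; 2]]);
  (10, 17, [:: [:: 2; 1; 2]]);
  (10, 18, [:: [:: 2; 1; 2]; [:: 1; 2; 2]]);
  (10, 19, [:: [:: 2; 1; 2]; [:: 1; 2; 2]]);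
  (11, 12, [::]);
  (11, 13, [:: [:: 1; 0; 2]]);
  (11, 14, [:: [:: 1; 0; 2]]);
  (11, 15, [:: [:: 1; 1; 2]]);
  (11, 16, [:: [:: 1; 1; 2]; [:: 2; 1; 2]]);
  (11, 17, [:: [:: 1; 1; 2]; [:: 2; 1; 2]]);
  (11, 18, [:: [:: 1; 1; 2]; [:: 2; 1; 2]; [:: 1; 2; 2]]);
  (11, 19, [:: [:: 1; 1; 2]; [:: 2; 1; 2]; [:: 1; 2; 2]]);
  (12, 13, [::]);
  (12, 14, [::]);
  (12, 15, [:: [:: 0; 1; 2]; [:: 1; 1; 2]]);
  (12, 16, [:: [:: 0; 1; 2]; [:: 1; 1; 2]; [:: 2; 1; 2]]);
  (12, 17, [:: [:: 0; 1; 2]; [:: 1; 1; 2]; [:: 2; 1; 2]]);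
  (13, 14, [:: [:: 1; 0; 2]]);
  (13, 15, [:: [:: 1; 0; 2]; [:: 0; 1; 2]; [:: 1; 1; 2]]);
  (14, 15, [:: [:: 1; 0; 2]; [:: 0; 1; 2]; [:: 1; 1; 2]]);
  (15, 16, [::]);
  (15, 17, [::]);
  (15, 18, [:: [:: 1; 2; 2]]);
  (15, 19, [:: [:: 1; 2; 2]]);
  (16, 17, [:: [:: 2; 1; 2]]);
  (16, 18, [:: [:: 2; 1; 2]; [:: 1; 2; 2]]);
  (16, 19, [:: [:: 2; 1; 2]; [:: 1; 2; 2]]);
  (17, 18, [::]);
  (17, 19, [::]);
  (18, 19, [:: [:: 1; 2; 2]])].


Lemma chk3 : check 3 2 W3 cons3. Proof. by vm_compute. Qed.
Lemma srch3 : srch 2 (csOf cons3) (size W3) [::] = false. Proof. by vm_compute. Qed.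
Lemma chk4 : check 4 2 W4 cons4. Proof. by vm_compute. Qed.
Lemma srch4 : srch 3 (csOf cons4) (size W4) [::] = false. Proof. by vm_compute. Qed.
Lemma chk5 : check 4 3 W5 cons5. Proof. by vm_compute. Qed.
Lemma srch5 : srch 4 (csOf cons5) (size W5) [::] = false. Proof. by vm_compute. Qed.

Lemma lower_from (T : finType) (e : rel T) C :
  (forall f, packing_coloring e C.-1 f -> False) ->
  forall c', packing_colorable e c' -> C <= c'.
Proof.
move=> H c' [f [fb fp]]; rewrite leqNgt; apply/negP => lt.
apply: (H f); split => // x; have := fb x; lia.
Qed.

Lemma up3 n : 2 <= n -> packing_colorable (SPk 3 n) 3.
Proof.
move=> hn; apply: (ub (F := F3)).
  by move=> u; rewrite /F3; repeat case: ifP.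
move=> u v p w el ne eF le.
apply: (core3 w el ne eF le); rewrite /hd; apply: nth_toR_lt; lia.
Qed.

Lemma up4 k n c : 2 <= n -> (n = 2 -> c = 4) -> (3 <= n -> c = 5) ->
  packing_colorable (SPk k n) c.
Proof.
move=> hn h2 h3; apply: (ub (F := F4)).
  move=> u; have := F4_le (toR u).
  have [e|ne] := eqVneq n 2.
    rewrite (h2 e) /F4 (nth_default 0 (_ : size (toR u) <= 2)); last by rewrite size_toR e.
    by repeat case: ifP.
  rewrite h3; last by lia.
  by rewrite /F4; repeat case: ifP.
move=> u v p w el ne eF le.
exact: (core4 w el ne eF le).
Qed.

Theorem theorem3 (k n : nat) :
  3 <= k -> 2 <= n ->
  [/\ (k = 3 -> packing_chromatic_number_is (SPk k n) 3),
      (4 <= k -> n = 2 -> packing_chromatic_number_is (SPk k n) 4) &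
      (4 <= k -> 3 <= n -> packing_chromatic_number_is (SPk k n) 5)].
Proof.
move=> hk hn; have k0 : 0 < k by lia.
pose d : 'I_k := Ordinal k0.
split.
- move=> ek; subst k; split; first exact: up3.
  apply: lower_from => f.
  exact: (@lb 3 n 3 2 2 W3 cons3 d (leqnn 3) hn chk3 srch3 f).
- move=> h4 en; split; first by apply: up4 => //; lia.
  apply: lower_from => f.
  exact: (@lb k n 4 2 3 W4 cons4 d h4 hn chk4 srch4 f).
- move=> h4 h3; split; first by apply: up4 => //; lia.
  apply: lower_from => f.
  exact: (@lb k n 4 3 4 W5 cons5 d h4 h3 chk5 srch5 f).
Qed.
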